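(* There is an algorithm which, on input a prime $p$ and a primitive root $g$ modulo $p$ with $1<g<p$, computes every value $q_p(u)$, $0\le u<p-1$, using $O(p)$ arithmetic operations on $O(\log p)$-bit integers.
   Context: For a prime $p$ and an integer $u$ with $\gcd(u,p)=1$, the Fermat quotient $q_p(u)$ is the unique integer with $q_p(u)\equiv (u^{p-1}-1)/p \pmod p$ and $0\le q_p(u)\le p-1$; also $q_p(kp)=0$ for all $k\in\mathbb{Z}$. *)

(* Defs.v *)
From mathcomp Require Import all_boot.
Set Implicit Arguments. Unset Strict Implicit. Unset Printing Implicit Defensive.

(* q_p(u) = ((u^(p-1) - 1)/p) mod p for p not dividing u (the division is exact
   when p is prime and gcd(u,p)=1, by Fermat); q_p(kp) = 0. *)
Definition fermat_quotient (p u : nat) : nat :=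
  if p %| u then 0 else ((u ^ p.-1 - 1) %/ p) %% p.

Definition primitive_root_mod (p g : nat) : Prop :=
  coprime g p /\ g ^ totient p = 1 %[mod p] /\
  (forall k, 0 < k -> k < totient p -> g ^ k %% p <> 1 %% p).

(* Each executed instruction
   is one arithmetic operation (unit cost).  Word sizes are controlled
   separately by bounding every value ever held in memory. *)
Inductive binop := OAdd | OSub | OMul | ODiv | OMod.

Definition eval_op (o : binop) (a b : nat) : nat :=
  match o with
  | OAdd => a + b | OSub => a - b | OMul => a * b
  | ODiv => a %/ b | OMod => a %% b
  end.

Inductive instr :=
  | IConst (i c : nat)
  | IOp (o : binop) (i j k : nat)
  | ILoad (i j : nat)
  | IStore (i j : nat)
  | IJlt (i j l : nat)
  | IJmp (l : nat)
  | IHalt.                        (* stop (also: pc outside the program)  *)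

Record state := State { pc : nat; cells : nat -> nat }.

Definition upd (m : nat -> nat) (a v : nat) : nat -> nat :=
  fun x => if x == a then v else m x.

Definition step (P : seq instr) (s : state) : option state :=
  let m := cells s in
  let n := (pc s).+1 in
  match nth IHalt P (pc s) with
  | IConst i c => Some (State n (upd m i c))
  | IOp o i j k => Some (State n (upd m i (eval_op o (m j) (m k))))
  | ILoad i j => Some (State n (upd m i (m (m j))))
  | IStore i j => Some (State n (upd m (m i) (m j)))
  | IJlt i j l => Some (State (if m i < m j then l else n) m)
  | IJmp l => Some (State l m)
  | IHalt => None
  end.

Definition run (P : seq instr) (k : nat) (s : state) : state :=
  iter k (fun t => odflt t (step P t)) s.

(* Input convention: cells[0] = p, cells[1] = g, all other cells 0, pc = 0.
   Output convention: on halting, cell cells[2] holds a base address b and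
   cells[b + u] holds the u-th output. *)
Definition init (p g : nat) : state :=
  State 0 (fun a => if a == 0 then p else if a == 1 then g else 0).

(* Main.v *)
Require Import Defs.
From mathcomp Require Import all_boot all_fingroup all_solvable zify.
Set Implicit Arguments. Unset Strict Implicit.

Lemma liftexp u c n : exists r, (u + c) ^ n = u ^ n + n * u ^ n.-1 * c + c * c * r.
Proof.
elim: n => [|n [r IH]]; first by exists 0; rewrite !expn0 muln0 !mul0n.
exists (u * r + n * u ^ n.-1 + c * r).
rewrite expnS IH /=.
have e : n * u ^ n.-1 * u = n * u ^ n by case: n {IH} => [|n] //=; rewrite -mulnA -expnSr.
rewrite expnS.
move: e; set X := u ^ n; set W := u ^ n.-1 => e.
nia.
Qed.

Lemma fermat1 p a : prime p -> coprime a p -> a ^ p.-1 %% p = 1.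
Proof.
move=> pp ca; have := Euler_exp_totient ca; rewrite totient_prime // => ->.
by rewrite modn_small // prime_gt1.
Qed.

Lemma NT p g j : prime p -> coprime g p ->
  ((g^(p*j) %% (p*p) - g^j %% p) %/ p * (g^((p-2)*j) %% p)) %% p
  = fermat_quotient p (g^j %% p).
Proof.
move=> pp cg.
have p1 := prime_gt1 pp; have p0 : 0 < p by exact: ltnW.
set u := g ^ j %% p.
have cu : coprime u p by rewrite coprime_modl coprimeXl.
have up : u < p by rewrite ltn_mod.
have nd : ~~ (p %| u) by rewrite -prime_coprime // coprime_sym.
have u0 : 0 < u by case: (posnP u) nd => // ->; rewrite dvdn0.
rewrite /fermat_quotient (negbTE nd) subn1.
have fu := fermat1 pp cu.
set Q := (u ^ p.-1 - 1) %/ p.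
have hQ : u ^ p.-1 = Q * p + 1.
  have h1 : 1 <= u ^ p.-1 by rewrite expn_gt0 u0.
  have : p %| u ^ p.-1 - 1 by rewrite -eqn_mod_dvd // fu modn_small.
  by rewrite /Q => /divnK ->; rewrite subnK.
have hY : g ^ (p * j) %% (p * p) = u ^ p %% (p * p).
  rewrite mulnC expnM {1}(divn_eq (g ^ j) p) -/u addnC.
  have [r ->] := liftexp u (g ^ j %/ p * p) p.
  rewrite -addnA.
  have -> : p * u ^ p.-1 * (g ^ j %/ p * p) + g ^ j %/ p * p * (g ^ j %/ p * p) * r
      = (u ^ p.-1 * (g ^ j %/ p) + g ^ j %/ p * (g ^ j %/ p) * r) * (p * p).
    set X := u ^ p.-1; set K := g ^ j %/ p; clearbody X K. nia.
  by rewrite addnC modnMDl.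
have hup : u ^ p = u + (u * Q) * p.
  by rewrite -(prednK p0) expnS (prednK p0) hQ mulnDr muln1 mulnA addnC.
have hZ : (u * (g ^ ((p - 2) * j) %% p)) %% p = 1.
  rewrite /u modnMm -expnD.
  have e2 : (p - 2).+1 = p.-1 by move: p1; clear; lia.
  have -> : j + (p - 2) * j = p.-1 * j by rewrite -mulSn e2.
  rewrite expnM -modnXm fermat1 // exp1n modn_small //.
rewrite hY hup {1}(divn_eq (u * Q) p).
set R := (u * Q) %% p; set K := u * Q %/ p.
have hR : R < p by rewrite ltn_mod.
have -> : u + (K * p + R) * p = K * (p * p) + (u + R * p).
  by rewrite mulnDl -mulnA addnCA.
rewrite modnMDl (@modn_small (u + R * p)); last first.
  apply: (@leq_trans (R.+1 * p)); first by rewrite mulSn ltn_add2r.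
  by rewrite leq_mul2r hR orbT.
by rewrite addKn mulnK // /R modnMml -subn1 -/Q mulnAC mulnC -modnMmr hZ muln1 ?modn_mod.
Qed.

Lemma surj p g : prime p -> primitive_root_mod p g ->
  forall u, 0 < u -> u < p -> exists2 j, j < p.-1 & g ^ j %% p = u.
Proof.
move=> pp [cg [_ hpr]] u u0 up; rewrite totient_prime // in hpr.
have p1 := prime_gt1 pp; have p0 : 0 < p by exact: ltnW.
have g0 : 0 < g by case: (posnP g) cg => // ->; rewrite /coprime gcd0n => /eqP E; rewrite E in p1.
have cgp : forall i, coprime p (g ^ i) by move=> i; rewrite coprime_sym coprimeXl.
have key : forall i j, i < j -> j < p.-1 -> g ^ i %% p = g ^ j %% p -> False.
  move=> i j ij jp e; set d := j - i.
  have d0 : 0 < d by rewrite subn_gt0.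
  have dp : d < p.-1 by apply: leq_ltn_trans jp; exact: leq_subr.
  have ej : g ^ j = g ^ i * g ^ d by rewrite -expnD subnKC // ltnW.
  have gd1 : 1 <= g ^ d by rewrite expn_gt0 g0.
  apply: (hpr d d0 dp).
  have : p %| g ^ i * (g ^ d - 1).
    rewrite mulnBr muln1 -ej -eqn_mod_dvd; first by rewrite e.
    by rewrite ej leq_pmulr.
  rewrite Gauss_dvdr // -eqn_mod_dvd //; by move/eqP.
have inj : forall i j, i < p.-1 -> j < p.-1 -> g ^ i %% p = g ^ j %% p -> i = j.
  move=> i j ip jp e; case: (ltngtP i j) => // h.
  - by case: (key i j h jp e).
  - by case: (key j i h ip (esym e)).
pose f := fun j : 'I_p.-1 => Ordinal (ltn_pmod (g ^ j) p0).
have finj : injective f.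
  move=> i j /(congr1 val) /= e; apply: val_inj; exact: inj (ltn_ord i) (ltn_ord j) e.
pose z := Ordinal p0.
have sub : [set f j | j in 'I_p.-1] \subset [set~ z].
  apply/subsetP => x /imsetP [j _ ->]; rewrite !inE; apply/eqP => /(congr1 val) /= /eqP.
  rewrite -/(dvdn p (g ^ j)) => pd.
  by move: (cgp j); rewrite /coprime (gcdn_idPl pd) => /eqP E; rewrite E in p1.
have := subset_leqif_cards sub; rewrite card_imset // cardsC1 !card_ord => /leqif_refl /eqP E.
have : Ordinal up \in [set~ z] by rewrite !inE; apply/eqP => /(congr1 val) /= E0; rewrite E0 in u0.
rewrite -E => /imsetP [j _ /(congr1 val) /= ->]; exists j => //; exact: ltn_ord.
Qed.

Definition Prog : seq instr := [::
 IConst 2 20; IOp OMul 3 0 0; IConst 4 1; IConst 7 1; IOp OSub 6 0 4; IOp OSub 6 6 4;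
 IOp OMul 7 7 1; IOp OMod 7 7 3; IOp OAdd 5 5 4; IJlt 5 6 6;
 IOp OMod 8 7 0; IOp OMul 7 7 1; IOp OMod 7 7 3; IOp OMul 7 7 1; IOp OMod 7 7 3;
 IConst 13 1; IConst 9 1; IConst 10 1; IConst 5 0; IOp OSub 6 0 4;
 IOp OSub 11 10 9; IOp ODiv 11 11 0; IOp OMul 11 11 13; IOp OMod 11 11 0;
 IOp OAdd 12 2 9; IStore 12 11; IOp OMul 9 9 1; IOp OMod 9 9 0;
 IOp OMul 10 10 7; IOp OMod 10 10 3; IOp OMul 13 13 8; IOp OMod 13 13 0;
 IOp OAdd 5 5 4; IJlt 5 6 20; IHalt].
Arguments modn : simpl never.
Arguments divn : simpl never.
Lemma runS k s : run Prog k.+1 s = run Prog k (odflt s (step Prog s)).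
Proof. by rewrite /run iterSr. Qed.
Lemma run0 s : run Prog 0 s = s. Proof. by []. Qed.
Lemma runD a b s : run Prog (a + b) s = run Prog b (run Prog a s).
Proof. by rewrite /run addnC iterD. Qed.
Lemma updE m i v j : upd m i v j = if j == i then v else m j.
Proof. by []. Qed.
Lemma upd_bnd B m i v j : (forall a, m a <= B) -> v <= B -> upd m i v j <= B.
Proof. by move=> hm hv; rewrite updE; case: ifP. Qed.

Section S.
Variables p g : nat.
Definition B := p * p * p * p.
Definition Bounded s := forall a, cells s a <= B.
Definition BR s c := forall j, j <= c -> Bounded (run Prog j s).

Definition L1 pcv i s := pc s = pcv /\ cells s 0 = p /\ cells s 1 = g /\ cells s 2 = 20 /\
  cells s 3 = p*p /\ cells s 4 = 1 /\ cells s 5 = i /\ cells s 6 = p-2 /\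
  cells s 7 = g^i %% (p*p) /\ (forall a, 8 <= a -> cells s a = 0).

Lemma mB x y : x <= p * p -> y <= p * p -> x * y <= B.
Proof. move=> hx hy; rewrite /B -mulnA; exact: leq_mul. Qed.

Lemma pB : 0 < p -> p <= B.
Proof. by move=> p0; rewrite /B -!mulnA; apply: leq_pmulr; rewrite !muln_gt0 p0. Qed.
Lemma ppB : 0 < p -> p * p <= B.
Proof. by move=> p0; rewrite /B -mulnA; apply: leq_pmulr; rewrite !muln_gt0 p0. Qed.
Lemma modB n d : 0 < d -> d <= B -> n %% d <= B.
Proof. by move=> d0 dB; apply: leq_trans dB; apply: ltnW; rewrite ltn_mod. Qed.
Ltac bnd0 := solve [ rewrite /B; nia | apply: mB; nia ].
Ltac bnd := solve [ bnd0 | apply: (leq_trans (leq_mod _ _)); bnd0 | apply: modB; rewrite /B; nia ].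

Lemma L1_bnd pcv i s : 3 <= p -> g < p -> i <= p - 2 -> L1 pcv i s -> Bounded s.
Proof.
move=> p3 gp hi [hpc [h0 [h1 [h2 [h3 [h4 [h5 [h6 [h7 hr]]]]]]]]] a; rewrite /B.
have h7' : g ^ i %% (p*p) < p * p by rewrite ltn_mod; nia.
do 8 (case: a => [|a]; rewrite ?h0 ?h1 ?h2 ?h3 ?h4 ?h5 ?h6 ?h7; try nia).
by rewrite hr.
Qed.

Lemma loop1 i s : 3 <= p -> g < p -> L1 6 i s -> i < p - 2 ->
  L1 (if i.+1 < p-2 then 6 else 10) i.+1 (run Prog 4 s) /\ BR s 4.
Proof.
move=> p3 gp H hi; have Hb := L1_bnd p3 gp (ltnW hi) H; move: H.
move=> [hpc [h0 [h1 [h2 [h3 [h4 [h5 [h6 [h7 hr]]]]]]]]].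
case: s Hb hpc h0 h1 h2 h3 h4 h5 h6 h7 hr => pc0 m Hb /= -> h0 h1 h2 h3 h4 h5 h6 h7 hr.
have h7' : g ^ i %% (p*p) < p * p by rewrite ltn_mod; nia.
split.
  rewrite /run /= /L1 /= !updE /= h0 h1 h3 h4 h5 h6 h7 addn1.
  do 8 (split; first by []).
  split; first by rewrite modnMml -expnSr.
  by move=> a ha; rewrite !updE; do 2 (case: eqP => [E|_]; first by subst); exact: hr.
move: h7' h7; set x := g ^ i %% (p*p) => h7' h7; clearbody x.
move=> j hj a.
do 5 (case: j hj => [|j] hj; [rewrite /run /=; repeat (apply: upd_bnd => //; try move=> ?); try exact: Hb; rewrite ?updE /= ?h0 ?h1 ?h3 ?h4 ?h5 ?h6 ?h7; try bnd|]).
by [].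
Qed.

Definition out i a := if has (fun j => a == 20 + g ^ j %% p) (iota 0 i)
  then fermat_quotient p (a - 20) else 0.

Definition L2 pcv i s := pc s = pcv /\ cells s 0 = p /\ cells s 1 = g /\ cells s 2 = 20 /\
  cells s 3 = p*p /\ cells s 4 = 1 /\ cells s 5 = i /\ cells s 6 = p.-1 /\
  cells s 7 = g^p %% (p*p) /\ cells s 8 = g^(p-2) %% p /\ cells s 9 = g^i %% p /\
  cells s 10 = g^(p*i) %% (p*p) /\ cells s 13 = g^((p-2)*i) %% p /\
  cells s 11 <= B /\ cells s 12 <= B /\ (forall a, 14 <= a -> cells s a = out i a).

Lemma out_bnd i a : 3 <= p -> out i a <= B.
Proof.
move=> p3. have pB : p <= B by apply: pB; exact: (ltn_trans _ p3).
rewrite /out; case: ifP => // _; rewrite /fermat_quotient; case: ifP => // _.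
apply: modB => //; exact: (ltn_trans _ p3).
Qed.

Lemma B81 : 3 <= p -> 81 <= B.
Proof. by move=> p3; rewrite /B; have := leq_mul (leq_mul (leq_mul p3 p3) p3) p3. Qed.

Lemma L2_bnd pcv i s : 3 <= p -> g < p -> i <= p -> L2 pcv i s -> Bounded s.
Proof.
move=> p3 gp ip [hpc [h0 [h1 [h2 [h3 [h4 [h5 [h6 [h7 [h8 [h9 [h10 [h13 [h11 [h12 hr]]]]]]]]]]]]]]] a.
have p0 : 0 < p by exact: (ltn_trans _ p3).
have pB := pB p0; have ppB := ppB p0; have b81 := B81 p3.
have mp : forall n, n %% p <= B by move=> n; apply: modB.
have mpp : forall n, n %% (p*p) <= B by move=> n; apply: modB; rewrite ?muln_gt0 ?p0.
have lp : forall n, n <= p -> n <= B by move=> n hn; exact: leq_trans pB.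
have lc : forall n, n <= 81 -> n <= B by move=> n hn; exact: leq_trans b81.
do 14 (case: a => [|a]; rewrite ?h0 ?h1 ?h2 ?h3 ?h4 ?h5 ?h6 ?h7 ?h8 ?h9 ?h10 ?h11 ?h12 ?h13 //;
   try first [exact: mp | exact: mpp | (apply: lc; done) | (apply: lp; first [exact: ltnW | exact: leq_pred | done])]).
rewrite hr //; exact: out_bnd.
Qed.




Lemma stateE s : s = State (pc s) (cells s). Proof. by case: s. Qed.

Arguments run : simpl never.
Lemma BR_S s c : 0 < c -> Bounded s -> BR (odflt s (step Prog s)) c.-1 -> BR s c.
Proof. by case: c => // c _ hb hr [|j] hj //; rewrite runS; apply: hr. Qed.
Lemma BR_0 s : Bounded s -> BR s 0.
Proof. by move=> hb [|j]. Qed.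

Section Bnd.
Hypothesis p3 : 3 <= p.
Lemma p0 : 0 < p. Proof. exact: (ltn_trans _ p3). Qed.
Lemma L_lt_pp n : n < p * p -> n <= B.
Proof. move=> h; apply: leq_trans (ppB p0); exact: ltnW. Qed.
Lemma L_sub n k : n <= B -> n - k <= B.
Proof. by move=> h; apply: leq_trans h; exact: leq_subr. Qed.
Lemma L_div n k : n <= B -> n %/ k <= B.
Proof. by move=> h; apply: leq_trans h; exact: leq_div. Qed.
Lemma L_modp n : n %% p <= B.
Proof. apply: modB; [exact: p0 | exact: pB p0]. Qed.
Lemma L_modpp n : n %% (p * p) <= B.
Proof. apply: modB; [by rewrite muln_gt0 p0 | exact: ppB p0]. Qed.
Lemma L_mulpp x y : x < p * p -> y < p * p -> x * y <= B.
Proof. by move=> hx hy; apply: mB; apply: ltnW. Qed.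
Lemma L_c n : n <= 81 -> n <= B.
Proof. by move=> h; apply: leq_trans (B81 p3). Qed.
Lemma L_p n : n <= p -> n <= B.
Proof. by move=> h; apply: leq_trans (pB p0). Qed.
Lemma L_20 x : x < p -> 20 + x <= B.
Proof.
move=> h; have h27 := leq_mul (leq_mul (leq_mul p3 p3) p3) (leqnn p).
apply: leq_trans h27; lia.
Qed.
Lemma lt_pp n : n < p -> n < p * p.
Proof. move=> h; apply: leq_trans h _; exact: leq_pmulr p0. Qed.
Lemma modp_lt n : n %% p < p. Proof. by rewrite ltn_mod p0. Qed.
Lemma modpp_lt n : n %% (p * p) < p * p. Proof. by rewrite ltn_mod muln_gt0 p0. Qed.
End Bnd.

Ltac vb2 := first [ assumption | exact: modpp_lt | (apply: lt_pp; first [assumption | exact: modp_lt])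
  | (apply: leq_ltn_trans (leq_div _ _) _; vb2) | (apply: leq_ltn_trans (leq_subr _ _) _; vb2) ].
Ltac vb := first [ done | assumption | (apply: ppB; assumption) | exact: L_modp | exact: L_modpp | (apply: L_c; done)
  | (apply: L_20; vb2)
  | (apply: L_sub; vb) | (apply: L_div; vb) | (apply: L_mulpp; vb2) | (apply: L_lt_pp; vb2)
  | (apply: L_p; first [done | assumption | exact: ltnW | exact: leq_pred | (apply: ltnW; vb2) | lia]) ].
Ltac ubnd := repeat match goal with
  | |- is_true (upd _ _ _ _ <= _) => apply: upd_bnd
  | |- forall _, _ => move=> ? end.
Ltac bstep Hb := move=> a /=; ubnd; try exact: Hb; vb.


Lemma outS i a : out i.+1 a =
  if a == 20 + g ^ i %% p then fermat_quotient p (a - 20) else out i a.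
Proof.
rewrite /out -[i.+1]addn1 iotaD has_cat /= orbF add0n.
by case: (a == 20 + g ^ i %% p) => /=; rewrite ?orbT ?orbF.
Qed.

Lemma loop2 i s : 3 <= p -> g < p ->
  (forall j, ((g^(p*j) %% (p*p) - g^j %% p) %/ p * (g^((p-2)*j) %% p)) %% p
             = fermat_quotient p (g^j %% p)) ->
  L2 20 i s -> i < p.-1 ->
  L2 (if i.+1 < p.-1 then 20 else 34) i.+1 (run Prog 14 s) /\ BR s 14.
Proof.
move=> p3 gp hq H hi; have Hb := L2_bnd p3 gp (ltnW (leq_trans hi (leq_pred _))) H; move: H.
move=> [hpc [h0 [h1 [h2 [h3 [h4 [h5 [h6 [h7 [h8 [h9 [h10 [h13 [h11 [h12 hr]]]]]]]]]]]]]]].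
rewrite (stateE s) hpc; rewrite (stateE s) in Hb.
move: (cells s) Hb h0 h1 h2 h3 h4 h5 h6 h7 h8 h9 h10 h13 h11 h12 hr => m Hb h0 h1 h2 h3 h4 h5 h6 h7 h8 h9 h10 h13 h11 h12 hr.
split.
  do 14 (rewrite runS /= ?updE /= ?h0 ?h1 ?h2 ?h3 ?h4 ?h5 ?h6 ?h7 ?h8 ?h9 ?h10 ?h13).
  rewrite run0 /L2 /= !updE /= ?h0 ?h1 ?h2 ?h3 ?h4 ?h5 ?h6 ?h7 ?h8 ?h9 ?h10 ?h13 addn1.
  do 10 (split; first by []).
  split; first by rewrite modnMml expnSr.
  split; first by rewrite modnMm -expnD mulnS addnC.
  split; first by rewrite modnMm -expnD mulnS addnC.
  split; first exact: L_modp.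
  split; first by apply: L_20 => //; exact: modp_lt.
  move=> a ha; rewrite !updE.
  have nk : forall k, k < 14 -> (a == k) = false by move=> k hk; apply/negbTE; rewrite neq_ltn (leq_trans hk ha) orbT.
  rewrite (nk 5) // (nk 13) // (nk 10) // (nk 9) // (nk 12) // (nk 11) // outS.
  case: eqP => [->|_]; last exact: hr.
  by rewrite hq addKn.
have p0 := p0 p3.
set x := g ^ i %% p in h9; set Y := g ^ (p * i) %% (p * p) in h10.
set Z := g ^ ((p - 2) * i) %% p in h13; set A := g ^ p %% (p * p) in h7.
set H := g ^ (p - 2) %% p in h8.
have hx : x < p by exact: modp_lt. have hY : Y < p * p by exact: modpp_lt.
have hZ : Z < p by exact: modp_lt. have hA : A < p * p by exact: modpp_lt.
have hH : H < p by exact: modp_lt. have gpp : g < p * p by exact: lt_pp.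
clearbody x Y Z A H.
do 14 (apply: BR_S; [done | bstep Hb | rewrite /= ?updE /= ?h0 ?h1 ?h2 ?h3 ?h4 ?h5 ?h6 ?h7 ?h8 ?h9 ?h10 ?h13]).
apply: BR_0; bstep Hb.
Qed.

Lemma prologue : 3 <= p -> g < p -> L1 6 0 (run Prog 6 (init p g)) /\ BR (init p g) 6.
Proof.
move=> p3 gp; have p0 := p0 p3.
have pp1 : 1 < p * p by apply: leq_trans (lt_pp p3 p3); [].
split.
  do 6 (rewrite runS /= ?updE /=).
  rewrite run0 /L1 /= !updE /=.
  do 7 (split; first by []).
  split; first by rewrite -subnDA.
  split; first by rewrite expn0 modn_small.
  move=> a ha; rewrite !updE.
  have nk : forall k, k < 8 -> (a == k) = false by move=> k hk; apply/negbTE; rewrite neq_ltn (leq_trans hk ha) orbT.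
  by rewrite !nk.
have Hb : Bounded (init p g).
  move=> [|[|a]]; rewrite /init /=; [by apply: (L_p p3) | apply: (L_p p3); exact: ltnW | by []].
rewrite /init. do 6 (apply: BR_S; [done | bstep Hb | rewrite /= ?updE /=]).
apply: BR_0; bstep Hb.
Qed.

Lemma middle s : 3 <= p -> g < p -> L1 10 (p - 2) s -> L2 20 0 (run Prog 10 s) /\ BR s 10.
Proof.
move=> p3 gp H; have Hb := L1_bnd p3 gp (leqnn _) H; move: H.
move=> [hpc [h0 [h1 [h2 [h3 [h4 [h5 [h6 [h7 hr]]]]]]]]].
rewrite (stateE s) hpc; rewrite (stateE s) in Hb.
move: (cells s) Hb h0 h1 h2 h3 h4 h5 h6 h7 hr => m Hb h0 h1 h2 h3 h4 h5 h6 h7 hr.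
have p0 := p0 p3.
split.
  do 10 (rewrite runS /= ?updE /= ?h0 ?h1 ?h2 ?h3 ?h4 ?h5 ?h6 ?h7).
  rewrite run0 /L2 /= !updE /= ?h0 ?h1 ?h2 ?h3 ?h4 ?h5 ?h6 ?h7 ?hr //.
  have p1 : 1 < p by exact: ltnW.
  have pp1 : 1 < p * p by apply: leq_trans (lt_pp p3 p3); [].
  do 7 (split; first by []).
  split; first by rewrite subn1.
  split; first by rewrite !modnMml -mulnA modnMml mulnA -!expnSr; have -> : (p - 2).+2 = p by lia.
  split; first exact: modn_dvdm (dvdn_mulr _ (dvdnn p)).
  split; first by rewrite expn0 modn_small.
  split; first by rewrite muln0 expn0 modn_small.
  split; first by rewrite muln0 expn0 modn_small.
  do 2 (split; first by []).
  move=> a ha; rewrite !updE.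
  have nk : forall k, k < 14 -> (a == k) = false by move=> k hk; apply/negbTE; rewrite neq_ltn (leq_trans hk ha) orbT.
  rewrite !nk // hr; last exact: leq_trans ha.
  by rewrite /out.
have hP : g ^ (p - 2) %% (p * p) < p * p by exact: modpp_lt.
have gpp : g < p * p by exact: lt_pp.
move: hP h7; set P := g ^ (p - 2) %% (p * p) => hP h7; clearbody P.
do 10 (apply: BR_S; [done | bstep Hb | rewrite /= ?updE /= ?h0 ?h1 ?h2 ?h3 ?h4 ?h5 ?h6 ?h7]).
apply: BR_0; bstep Hb.
Qed.

Lemma BR_D s a b : BR s a -> BR (run Prog a s) b -> BR s (a + b).
Proof.
move=> h1 h2 j hj; case: (leqP j a) => hja; first exact: h1.
rewrite -(subnKC (ltnW hja)) runD; apply: h2; by rewrite leq_subLR.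
Qed.

Lemma iter1 d : 3 <= p -> g < p -> forall i s, i + d.+1 = p - 2 -> L1 6 i s ->
  L1 10 (p - 2) (run Prog (4 * d.+1) s) /\ BR s (4 * d.+1).
Proof.
move=> p3 gp; elim: d => [|d IH] i s e H.
  have hi : i < p - 2 by move: e; clear; lia.
  have [H1 hb] := loop1 p3 gp H hi.
  have e' : i.+1 = p - 2 by move: e; clear; lia.
  by rewrite e' ltnn in H1; rewrite muln1; split.
have hi : i < p - 2 by move: e; clear; lia.
have [H1 hb] := loop1 p3 gp H hi.
have lt : i.+1 < p - 2 by move: e; clear; lia.
rewrite lt in H1.
have e2 : i.+1 + d.+1 = p - 2 by move: e; clear; lia.
have [IH1 IH2] := IH i.+1 (run Prog 4 s) e2 H1.
rewrite mulnS runD; split; [exact: IH1 | exact: BR_D].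
Qed.

Lemma iter2 d : 3 <= p -> g < p ->
  (forall j, ((g^(p*j) %% (p*p) - g^j %% p) %/ p * (g^((p-2)*j) %% p)) %% p
             = fermat_quotient p (g^j %% p)) ->
  forall i s, i + d.+1 = p.-1 -> L2 20 i s ->
  L2 34 p.-1 (run Prog (14 * d.+1) s) /\ BR s (14 * d.+1).
Proof.
move=> p3 gp hq; elim: d => [|d IH] i s e H.
  have hi : i < p.-1 by move: e; clear; lia.
  have [H1 hb] := loop2 p3 gp hq H hi.
  have e' : i.+1 = p.-1 by move: e; clear; lia.
  by rewrite e' ltnn in H1; rewrite muln1; split.
have hi : i < p.-1 by move: e; clear; lia.
have [H1 hb] := loop2 p3 gp hq H hi.
have lt : i.+1 < p.-1 by move: e; clear; lia.
rewrite lt in H1.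
have e2 : i.+1 + d.+1 = p.-1 by move: e; clear; lia.
have [IH1 IH2] := IH i.+1 (run Prog 14 s) e2 H1.
rewrite mulnS runD; split; [exact: IH1 | exact: BR_D].
Qed.

End S.

Lemma out_final p g : prime p -> primitive_root_mod p g ->
  forall u, u < p.-1 -> out p g p.-1 (20 + u) = fermat_quotient p u.
Proof.
move=> pp pr u up; have [cg _] := pr.
have p1 := prime_gt1 pp.
rewrite /out addKn; case: (posnP u) => [->|u0].
  by rewrite /fermat_quotient dvdn0; case: ifP.
have up' : u < p by apply: leq_trans up _; exact: leq_pred.
have [j jp E] := surj pp pr u0 up'.
case: ifP => // /hasP []; exists j; first by rewrite mem_iota.
by rewrite E.
Qed.

Theorem theorem5 :
  exists (P : seq instr) (C D : nat),
    forall p g : nat,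
      prime p -> 1 < g -> g < p -> primitive_root_mod p g ->
      exists n : nat,
        [/\ n <= C * p,
            step P (run P n (init p g)) = None,
            (forall k a, k <= n -> cells (run P k (init p g)) a <= p ^ D)
          & (forall u, u < p.-1 ->
               cells (run P n (init p g)) (cells (run P n (init p g)) 2 + u)
               = fermat_quotient p u)].
Proof.
exists Prog, 18, 4 => p g pp g1 gp pr.
have p3 : 3 <= p by apply: leq_ltn_trans gp.
have [cg _] := pr.
have hq : forall j, ((g^(p*j) %% (p*p) - g^j %% p) %/ p * (g^((p-2)*j) %% p)) %% p
             = fermat_quotient p (g^j %% p) by move=> j; exact: NT.
have [HA BA] := prologue p3 gp.
have eA : 0 + (p - 3).+1 = p - 2 by move: p3; clear; lia.
have [HB BB] := iter1 p3 gp eA HA.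
have [HC BC] := middle p3 gp HB.
have eC : 0 + (p - 2).+1 = p.-1 by move: p3; clear; lia.
have [HD BD] := iter2 p3 gp hq eC HC.
exists (6 + (4 * (p - 3).+1 + (10 + 14 * (p - 2).+1))).
rewrite !runD.
have hB : B p = p ^ 4 by rewrite /B !expnS expn0 muln1 !mulnA.
move: HD => [hpc [_ [_ [h2 [_ [_ [_ [_ [_ [_ [_ [_ [_ [_ [_ hr]]]]]]]]]]]]]]].
split.
- by move: p3; clear; lia.
- by rewrite /step hpc.
- move=> k a hk; rewrite -hB.
  have := BR_D BA (BR_D BB (BR_D BC BD)).
  by move=> /(_ k hk a).
- move=> u up; rewrite h2 hr; last exact: ltn_addr.
  exact: out_final.
Qed.
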